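(* Let $\mathcal{I}$ be an independent configuration of $d$ doors in which all doors have the same fundamental distribution, and let $A_{\mathrm{simp}}=(1,2,\dots,d)^\infty$. Then $\mathbb{T}_{\mathcal{I}}(A_{\mathrm{simp}})=\Theta(\mathbb{T}_{\mathcal{I}})$, with universal constants.
   Context: Doors $1,\dots,d$ ($d\ge2$) are initially closed and stay open once opened. In an independent configuration with common fundamental distribution $p$, doors behave mutually independently and each door is still closed after $n$ knocks on it with probability $p(n)$ ($p(0)=1$, $p$ non-increasing, $\sum_n p(n)<\infty$). A knock sequence is an infinite sequence of door indices executed in order without any feedback; $\mathbb{T}_{\mathcal{I}}(\pi)$ is the expected number of knocks until all doors are open when running $\pi$, and $\mathbb{T}_{\mathcal{I}}=\inf_\pi\mathbb{T}_{\mathcal{I}}(\pi)$. $A_{\mathrm{simp}}$ is the sequence $1,2,\dots,d,1,2,\dots,d,\dots$. *)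

(* Defs.v *)
From HB Require Import structures.
From mathcomp Require Import all_boot all_order all_algebra.
From mathcomp Require Import all_classical all_reals all_analysis.
Set Implicit Arguments. Unset Strict Implicit. Unset Printing Implicit Defensive.
Import Order.TTheory GRing.Theory Num.Theory.
Local Open Scope ring_scope.
Local Open Scope classical_set_scope.

(* Doors are indexed by 'I_d (door k+1 of the paper is ordinal k).
   A knock sequence is an infinite sequence of door indices. *)
Definition knock_seq (d : nat) := nat -> 'I_d.

Definition knocks (d : nat) (pi : knock_seq d) (i : 'I_d) (t : nat) : nat :=
  \sum_(s < t) (pi s == i).

(* Fundamental distribution: p n = probability that a door is still closed
   after n knocks on it. *)
Definition fundamental_distribution (R : realType) (p : nat -> R) : Prop :=
  p 0%N = 1 /\ (forall n, 0 <= p n <= 1) /\ (forall m n, (m <= n)%N -> p n <= p m)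
  /\ (\sum_(0 <= n <oo) (p n)%:E < +oo)%E.

(* In the independent configuration with common fundamental distribution p,
   the probability that all doors are open after the first t knocks of pi is
   \prod_i (1 - p (knocks pi i t)); the stopping time T satisfies T > t iff
   not all doors are open after t knocks, so E[T] = \sum_t P(T > t). *)
Definition expected_time (R : realType) (d : nat) (p : nat -> R)
    (pi : knock_seq d) : \bar R :=
  (\sum_(0 <= t <oo) ((1 - \prod_(i < d) (1 - p (knocks pi i t)))%:E))%E.

Definition opt_time (R : realType) (d : nat) (p : nat -> R) : \bar R :=
  ereal_inf [set expected_time p pi | pi in [set: knock_seq d]].

Definition Asimp (d : nat) (hd : (0 < d)%N) : knock_seq d :=
  fun t => Ordinal (ltn_pmod t hd).

(* Main.v *)
Require Import Defs.
From HB Require Import structures.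
From mathcomp Require Import all_boot all_order all_algebra.
From mathcomp Require Import all_classical all_reals all_analysis.
From mathcomp Require Import lra.
From Stdlib Require Import Lia.
From mathcomp Require Import zify.
Import Order.TTheory GRing.Theory Num.Theory.
Local Open Scope ring_scope.

Section Helpers.
Variable R : realType.

Lemma one_sub_prod_le (d : nat) (x : 'I_d -> R) :
  (forall i, 0 <= x i <= 1) ->
  0 <= \prod_(i < d) (1 - x i) <= 1 /\
  1 - \prod_(i < d) (1 - x i) <= \sum_(i < d) x i.
Proof.
move=> hx.
apply: (big_rec2 (fun y1 y2 : R => 0 <= y1 <= 1 /\ 1 - y1 <= y2)).
  by split; [rewrite ler01 lexx | rewrite subrr].
move=> i y1 y2 _ [/andP [h1 h2] h3].
have /andP [x0 x1] := hx i.
split; last by nra.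
apply/andP; split; nra.
Qed.

Lemma pow_bound (y : R) (h : nat) : 0 <= y <= 1 ->
  (1 - y) ^+ h * (1 + h%:R * y) <= 1.
Proof.
move=> /andP [y0 y1]; elim: h => [|h IH]; first by rewrite expr0 mul0r addr0 mul1r.
have q0 : 0 <= (1 - y) ^+ h by apply: exprn_ge0; lra.
rewrite exprSr -mulrA.
apply: le_trans IH; apply: ler_wpM2l => //.
have hn : 0 <= h%:R :> R by rewrite ler0n.
rewrite -natr1; nra.
Qed.

End Helpers.

Section Knocks.
Variable d : nat.

Lemma knocks_split (pi : knock_seq d) i t u :
  knocks pi i (t + u) = (knocks pi i t + \sum_(s < u) (pi (t + s)%N == i))%N.
Proof.
by rewrite /knocks big_split_ord.
Qed.

Lemma knocks_mono (pi : knock_seq d) i t t' : (t <= t')%N ->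
  (knocks pi i t <= knocks pi i t')%N.
Proof.
move=> /subnKC <-; rewrite knocks_split; exact: leq_addr.
Qed.

Lemma knocks_sum (pi : knock_seq d) t : (\sum_(i < d) knocks pi i t)%N = t.
Proof.
rewrite /knocks exchange_big /=.
rewrite -[t in RHS]card_ord -sum1_card.
apply: eq_bigr => s _.
rewrite (bigD1 (pi s)) //= eqxx big1 // => j /negbTE.
by rewrite eq_sym => ->.
Qed.

Lemma knocks_Asimp (hd : (0 < d)%N) i t : (t %/ d <= knocks (Asimp hd) i t)%N.
Proof.
have H : forall m, (m <= knocks (Asimp hd) i (m * d))%N.
  elim=> [|m IH] //.
  rewrite mulSn addnC knocks_split.
  have h1 : (1 <= \sum_(s < d) (Asimp hd (m * d + s)%N == i))%N.
    rewrite (bigD1 i) //=.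
    suff -> : Asimp hd (m * d + i) = i by rewrite eqxx.
    apply: val_inj => /=.
  by rewrite modnMDl modn_small.
  by rewrite -addn1; apply: leq_add.
apply: leq_trans (H _) _; apply: knocks_mono.
by rewrite leq_divM.
Qed.

End Knocks.

Lemma count_good (d : nat) (hd : (0 < d)%N) (k : 'I_d -> nat) s :
  (\sum_(i < d) k i)%N = s ->
  (d < 2 * #|[pred i | k i * d <= 2 * s]|)%N.
Proof.
move=> hs.
set good := [pred i | k i * d <= 2 * s]%N.
have hc := cardC good; rewrite card_ord in hc.
set c := #|[predC good]| in hc.
have H : (c * (2 * s).+1 <= s * d)%N.
  have -> : (s * d = \sum_(i < d) k i * d)%N by rewrite -hs big_distrl.
  rewrite (bigID good) /=.
  apply: leq_trans (leq_addl _ _).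
  have -> : c = #|[pred i | ~~ good i]| by [].
  rewrite -sum_nat_const.
  apply: leq_sum => i; rewrite !inE => hi.
  by rewrite ltnNge.
rewrite ltnNge; apply/negP => hle.
clearbody c good.
move: hc hle; set g := #|good| => hc hle.
have h2 : (d <= 2 * c)%N by lia.
have h3 : (d * (2 * s).+1 <= 2 * c * (2 * s).+1)%N by rewrite leq_mul2r h2 orbT.
nia.
Qed.

Definition term (R : realType) (d : nat) (p : nat -> R) (pi : knock_seq d) t : R :=
  1 - \prod_(i < d) (1 - p (knocks pi i t)).
Arguments term {R d}.

Lemma term_bounds (R : realType) (d : nat) (p : nat -> R) (pi : knock_seq d) t :
  (forall n, 0 <= p n <= 1) -> 0 <= term p pi t <= 1.
Proof.
move=> pb; have [/andP [h1 h2] _] := @one_sub_prod_le R _ (fun i => p (knocks pi i t)) (fun i => pb _).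
rewrite /term; apply/andP; split; lra.
Qed.

Lemma pointwise (R : realType) (d : nat) (hd : (0 < d)%N) (p : nat -> R)
  (pi : knock_seq d) s t : fundamental_distribution p -> (s.*2 <= t)%N ->
  term p (Asimp hd) t <= 3 * term p pi s.
Proof.
move=> [p0 [pb [pm _]]] hst.
set M := (2 * s %/ d)%N.
set y := p M.
have [y0 y1] : 0 <= y /\ y <= 1 by have /andP[] := pb M.
have [/andP [a0 a1] a2] := @one_sub_prod_le R _ (fun i => p (knocks (Asimp hd) i t)) (fun i => pb _).
have hsum : \sum_(i < d) p (knocks (Asimp hd) i t) <= d%:R * y.
  have -> : d%:R * y = \sum_(i < d) y by rewrite sumr_const card_ord mulr_natl.
  apply: ler_sum => i _; apply: pm.
  apply: leq_trans (@knocks_Asimp d hd i t).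
  by apply: leq_div2r; rewrite mul2n.
set k := fun i => knocks pi i s.
set good := [pred i | (k i * d <= 2 * s)%N].
have hcount := @count_good d hd _ _ (@knocks_sum d pi s).
set h := #|_| in hcount.
have hprod : \prod_(i < d) (1 - p (knocks pi i s)) <= (1 - y) ^+ h.
  rewrite (bigID good) /=.
  have g0 : 0 <= \prod_(i < d | good i) (1 - p (knocks pi i s)).
    by apply: prodr_ge0 => i _; have /andP[_ ?] := pb (knocks pi i s); lra.
  have g1 : \prod_(i < d | good i) (1 - p (knocks pi i s)) <= (1 - y) ^+ h.
    rewrite /h -prodr_const.
    apply: ler_prod => i hi; have /andP[_ ?] := pb (knocks pi i s).
    apply/andP; split; first lra.
    rewrite lerD2l lerN2; apply: pm.
    by rewrite /M leq_divRL.
  have ng : 0 <= \prod_(i < d | ~~ good i) (1 - p (knocks pi i s)) <= 1.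
    apply/andP; split.
      by apply: prodr_ge0 => i _; have /andP[_ ?] := pb (knocks pi i s); lra.
    apply: prodr_ile1 => i _; have /andP[? ?] := pb (knocks pi i s); lra.
  nra.
have hb := @pow_bound R y h (introT andP (conj y0 y1)).
have hdh : d%:R <= 2 * h%:R :> R.
  by rewrite -natrM ler_nat; apply: ltnW.
rewrite /term.
move: a0 a1 a2 hsum hprod hb hdh.
set A := \prod_(i < d) _.
set B := \prod_(i < d) _.
set S := \sum_(i < d) _.
set Q := (1 - y) ^+ h.
have Q0 : 0 <= Q by apply: exprn_ge0; lra.
have h0 : 0 <= h%:R :> R by rewrite ler0n.
set z := h%:R * y.
have z0 : 0 <= z by apply: mulr_ge0.
move=> a0 a1 a2 hsum hprod hb hdh.
have dy : d%:R * y <= 2 * z by rewrite /z mulrA; apply: ler_wpM2r.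
have e1 : (1 - A) * (1 + z) <= 3 * z by nra.
have e2 : 3 * z <= 3 * (1 - B) * (1 + z) by nra.
have : (1 - A) * (1 + z) <= (3 * (1 - B)) * (1 + z) by lra.
by rewrite ler_pM2r //; lra.
Qed.

Lemma series_cmp (R : realType) (a b : nat -> R) :
  (forall t, 0 <= a t) -> (forall s, 0 <= b s) ->
  (forall s t, (s.*2 <= t)%N -> a t <= 3 * b s) ->
  (\sum_(0 <= t <oo) (a t)%:E <= 6%:E * \sum_(0 <= s <oo) (b s)%:E)%E.
Proof.
move=> a0 b0 hab.
have fin : forall n, \sum_(0 <= t < n.*2) a t <= 6 * \sum_(0 <= s < n) b s.
  elim=> [|n IH]; first by rewrite !big_geq // mulr0.
  rewrite doubleS !big_nat_recr //=.
  have := hab n n.*2 (leqnn _); have := hab n n.*2.+1 (leqnSn _); lra.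
have fin2 : forall n, \sum_(0 <= t < n) a t <= 6 * \sum_(0 <= s < n) b s.
  move=> n; apply: le_trans (fin n).
  rewrite (@big_cat_nat _ _ _ n 0 n.*2) //=; last by rewrite -addnn leq_addr.
  by rewrite lerDl; apply: sumr_ge0.
apply: lime_le; first by apply: is_cvg_nneseries => n _ _; rewrite lee_fin.
apply: nearW => n /=.
rewrite sumEFin.
apply: (@le_trans _ _ (6 * \sum_(0 <= s < n) b s)%:E); first by rewrite lee_fin.
rewrite EFinM; apply: lee_wpmul2l; first by rewrite lee_fin.
rewrite -sumEFin; apply: nneseries_lim_ge => i _ _; rewrite lee_fin; exact: b0.
Qed.

Theorem mainTheorem4 (R : realType) :
  exists c1 c2 : R, 0 < c1 /\ 0 < c2 /\
    forall (d : nat) (hd : (1 < d)%N) (p : nat -> R),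
      fundamental_distribution p ->
      (c1%:E * opt_time d p <= expected_time p (Asimp (ltnW hd)))%E /\
      (expected_time p (Asimp (ltnW hd)) <= c2%:E * opt_time d p)%E.
Proof.
exists 1, 6; split; first exact: ltr01.
split; first by [].
move=> d hd p hp; split.
  rewrite mul1e; apply: ereal_inf_lbound; by exists (Asimp (ltnW hd)).
have hb : forall n, 0 <= p n <= 1 by case: hp => _ [].
have H : forall pi : knock_seq d, (expected_time p (Asimp (ltnW hd)) <= 6%:E * expected_time p pi)%E.
  move=> pi.
  have := (@series_cmp R (term p (Asimp (ltnW hd))) (term p pi)).
  apply.
  - by move=> t; case/andP: (@term_bounds R d p (Asimp (ltnW hd)) t hb).
  - by move=> t; case/andP: (@term_bounds R d p pi t hb).
  - by move=> s t hst; apply: pointwise.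
rewrite -lee_pdivrMl //.
rewrite /opt_time; apply: le_ereal_inf_tmp => _ [pi _ <-].
by rewrite lee_pdivrMl.
Qed.
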